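(* For every $r\ge1$ there exists a constant $C=C(r,\rho)$ such that for every integer $n\ge2$ and every integer $p\in[1,n/2]$, $$\mathbb E\big[(\log\#\mathsf T^{*n}_{n-p})^r\big]^{1/r}\le C\log\frac np\qquad\text{and}\qquad\mathbb E\big[(\log\#\mathsf T^{*n}_{n})^r\big]^{1/r}\le C\log n.$$
   Context: Fix $\alpha\in(1,2]$ and let $\rho$ be a non-degenerate probability measure on $\mathbb Z_+$ with mean one such that $\sum_{k\ge0}\rho(k)r^k=r+(1-r)^\alpha L(1-r)$ for $r\in[0,1)$, with $L$ slowly varying at $0^+$. Under $\mathbb P$, $\mathsf T^{(n)}$ is a Galton–Watson tree with offspring distribution $\rho$ conditioned to have at least one vertex at generation $n$. The reduced tree $\mathsf T^{*n}$ is the set of vertices of $\mathsf T^{(n)}$ having at least one descendant at generation $n$ (viewed as a rooted tree), and $\mathsf T^{*n}_k$ is its set of vertices at generation $k$. *)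

(* Defs.v *)
From Stdlib Require Import Reals List.
Import ListNotations.
Open Scope R_scope.

Inductive tree : Type := Node : list tree -> tree.

Fixpoint trunc_ok (n : nat) (t : tree) : Prop :=
  match t, n with
  | Node ts, O => ts = nil
  | Node ts, S m =>
      (fix all (l : list tree) : Prop :=
         match l with nil => True | s :: l' => trunc_ok m s /\ all l' end) ts
  end.

(** Galton-Watson weight of the tree truncated at generation n:
    product over vertices of generation < n of rho(number of children). *)
Fixpoint gw_weight (rho : nat -> R) (n : nat) (t : tree) : R :=
  match t, n with
  | Node _, O => 1
  | Node ts, S m =>
      rho (length ts) *
      (fix pr (l : list tree) : R :=
         match l with nil => 1 | s :: l' => gw_weight rho m s * pr l' end) ts
  end.

Fixpoint gen (k : nat) (t : tree) : list tree :=
  match t, k with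
  | _, O => t :: nil
  | Node ts, S j =>
      (fix cat (l : list tree) : list tree :=
         match l with nil => nil | s :: l' => gen j s ++ cat l' end) ts
  end.

Definition reaches (m : nat) (t : tree) : bool :=
  negb (Nat.eqb (length (gen m t)) 0).

(** #T^{*n}_k : number of vertices at generation k having at least one
    descendant at generation n. *)
Definition reduced_count (n k : nat) (t : tree) : nat :=
  length (filter (reaches (n - k)) (gen k t)).

Definition lsum (f : tree -> R) (L : list tree) : R :=
  fold_right (fun t acc => f t + acc) 0 L.

(** Sum of a nonnegative family over the (countable) set S of trees:
    the supremum of finite partial sums. *)
Definition has_sum (S : tree -> Prop) (f : tree -> R) (v : R) : Prop :=
  is_lub (fun s => exists L, NoDup L /\ Forall S L /\ s = lsum f L) v.

(** E is the expectation of f(T^{(n)}), where T^{(n)} is a GW(rho) tree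
    conditioned to have a vertex at generation n (f only depends on
    generations <= n, so we work with the tree truncated at generation n). *)
Definition gw_cond_expect (rho : nat -> R) (n : nat) (f : tree -> R) (E : R) : Prop :=
  exists A P,
    has_sum (fun t => trunc_ok n t /\ reaches n t = true)
            (fun t => gw_weight rho n t * f t) A /\
    has_sum (fun t => trunc_ok n t /\ reaches n t = true) (gw_weight rho n) P /\
    E = A / P.

(** Real power with the convention 0^y = 0 (x^y for x > 0). *)
Definition rpow (x y : R) : R :=
  if Rle_dec x 0 then 0 else Rpower x y.

Definition slowly_varying_0 (L : R -> R) : Prop :=
  (forall x, 0 < x <= 1 -> 0 < L x) /\
  forall lam, 0 < lam -> forall eps, 0 < eps ->
    exists delta, 0 < delta /\
      forall x, 0 < x < delta -> Rabs (L (lam * x) / L x - 1) < eps.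

(* Main.v *)
Require Import Defs.
From Stdlib Require Import Reals List Lra Lia FinFun Classical.
Import ListNotations.
Open Scope R_scope.

Module M_B.

Lemma lsum_nil f : lsum f [] = 0. Proof. reflexivity. Qed.
Lemma lsum_cons f a l : lsum f (a :: l) = f a + lsum f l. Proof. reflexivity. Qed.

Section LS.
Context {A : Type}.
Definition ls (f : A -> R) (L : list A) : R := fold_right (fun t acc => f t + acc) 0 L.
Lemma ls_app f l1 l2 : ls f (l1 ++ l2) = ls f l1 + ls f l2.
Proof. induction l1; simpl; [lra|rewrite IHl1; lra]. Qed.
Lemma ls_ext f g l : (forall x, In x l -> f x = g x) -> ls f l = ls g l.
Proof. induction l; simpl; intros H; auto. rewrite H, IHl; auto. Qed.
Lemma ls_le f g l : (forall x, In x l -> f x <= g x) -> ls f l <= ls g l.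
Proof. induction l; simpl; intros H; [lra|]. pose proof (H a (or_introl eq_refl)). pose proof (IHl (fun x h => H x (or_intror h))). lra. Qed.
Lemma ls_nonneg f l : (forall x, In x l -> 0 <= f x) -> 0 <= ls f l.
Proof. induction l; simpl; intros H; [lra|]. pose proof (H a (or_introl eq_refl)). pose proof (IHl (fun x h => H x (or_intror h))). lra. Qed.
Lemma ls_plus f g l : ls (fun x => f x + g x) l = ls f l + ls g l.
Proof. induction l; simpl; lra. Qed.
Lemma ls_minus f g l : ls (fun x => f x - g x) l = ls f l - ls g l.
Proof. induction l; simpl; lra. Qed.
Lemma ls_scal c f l : ls (fun x => c * f x) l = c * ls f l.
Proof. induction l; simpl; [lra|rewrite IHl; lra]. Qed.
Lemma ls_sub (f : A -> R) (L U : list A) : NoDup L -> incl L U -> (forall x, 0 <= f x) ->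
  ls f L <= ls f U.
Proof.
  intros HN; revert U; induction HN as [|a L Ha HN IH]; intros U Hi Hf.
  - simpl. apply ls_nonneg; auto.
  - assert (Hin : In a U) by (apply Hi; left; auto).
    destruct (in_split _ _ Hin) as [U1 [U2 ->]].
    rewrite ls_app; simpl.
    assert (ls f L <= ls f (U1 ++ U2)).
    { apply IH; auto. intros x Hx. assert (In x (U1 ++ a :: U2)) by (apply Hi; right; auto).
      apply in_app_or in H. apply in_or_app. destruct H as [H|[H|H]]; auto. subst; contradiction. }
    rewrite ls_app in H. simpl. lra.
Qed.
End LS.

Lemma lsum_ls f L : lsum f L = ls f L. Proof. reflexivity. Qed.

Lemma ls_map {A B} (f : B -> R) (g : A -> B) l : ls f (map g l) = ls (fun x => f (g x)) l.
Proof. induction l; simpl; auto. rewrite IHl; auto. Qed.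
Lemma ls_flat_map {A B} (f : B -> R) (g : A -> list B) l :
  ls f (flat_map g l) = ls (fun x => ls f (g x)) l.
Proof. induction l; simpl; auto. rewrite ls_app, IHl; auto. Qed.

Lemma ls_seq (f : nat -> R) D : ls f (seq 0 (S D)) = sum_f_R0 f D.
Proof. induction D. simpl. lra. rewrite seq_S, ls_app, IHD. simpl. lra. Qed.

Fixpoint tuples {A} (k : nat) (l : list A) : list (list A) :=
  match k with O => [nil] | S k' => flat_map (fun x => map (cons x) (tuples k' l)) l end.

Definition prodW {A} (f : A -> R) (ts : list A) : R := fold_right (fun s acc => f s * acc) 1 ts.

Lemma tuples_prod {A} (f : A -> R) k l : ls (prodW f) (tuples k l) = (ls f l) ^ k.
Proof.
  induction k; simpl. lra.
  rewrite ls_flat_map. rewrite Rmult_comm, <- (ls_scal (ls f l ^ k) f l).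
  apply ls_ext; intros x _. rewrite ls_map. simpl.
  rewrite (ls_scal (f x) (prodW f)). rewrite IHk. lra.
Qed.

Lemma tuples_in {A} k (l : list A) ts : In ts (tuples k l) <-> length ts = k /\ Forall (fun x => In x l) ts.
Proof.
  revert ts; induction k; intros ts; simpl.
  - split. intros [<-|[]]; simpl; auto. intros [H _]. destruct ts; simpl in *; auto; discriminate.
  - rewrite in_flat_map. split.
    + intros [x [Hx Hm]]. apply in_map_iff in Hm. destruct Hm as [t [<- Ht]]. apply IHk in Ht.
      destruct Ht. simpl. split; auto.
    + intros [Hl HF]. destruct ts as [|x ts]; [discriminate|]. inversion HF; subst.
      exists x; split; auto. apply in_map. apply IHk. simpl in Hl. split; auto.
Qed.

Lemma NoDup_flat_map' {A B} (g : A -> list B) l :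
  NoDup l -> (forall x, In x l -> NoDup (g x)) ->
  (forall x y z, In x l -> In y l -> x <> y -> In z (g x) -> In z (g y) -> False) ->
  NoDup (flat_map g l).
Proof.
  induction 1 as [|a l Ha HN IH]; intros Hg Hd; simpl. constructor.
  apply NoDup_app. apply Hg; left; auto. apply IH. intros; apply Hg; right; auto.
  intros; eapply Hd; eauto; right; auto.
  intros z Hz1 Hz2. apply in_flat_map in Hz2. destruct Hz2 as [y [Hy Hz2]].
  eapply (Hd a y z); eauto. left; auto. right; auto. intro; subst; contradiction.
Qed.

End M_B.
Import M_B.

Module M_C.

Lemma trunc_S m ts : trunc_ok (S m) (Node ts) <-> Forall (trunc_ok m) ts.
Proof. simpl. induction ts; simpl. split; auto. rewrite IHts. split.
  intros [H1 H2]; constructor; auto. intros H; inversion H; auto. Qed.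
Lemma trunc_0 t : trunc_ok 0 t <-> t = Node nil.
Proof. destruct t as [ts]; simpl. split; intros H; [subst; auto|inversion H; auto]. Qed.

Lemma W_S rho m ts : gw_weight rho (S m) (Node ts) = rho (length ts) * prodW (gw_weight rho m) ts.
Proof. simpl. f_equal. Qed.
Lemma W_0 rho t : gw_weight rho 0 t = 1. Proof. destruct t; reflexivity. Qed.

Lemma gen_S j ts : gen (S j) (Node ts) = flat_map (gen j) ts.
Proof. simpl. induction ts; simpl; auto. Qed.
Lemma gen_0 t : gen 0 t = [t]. Proof. destruct t; reflexivity. Qed.

Lemma reaches_S n ts : reaches (S n) (Node ts) = existsb (reaches n) ts.
Proof. unfold reaches. rewrite gen_S. induction ts; simpl; auto.
  rewrite length_app. destruct (length (gen n a)); simpl; auto. Qed.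

Lemma rc_S m j ts : (j <= m)%nat ->
  INR (reduced_count (S m) (S j) (Node ts)) = ls (fun c => INR (reduced_count m j c)) ts.
Proof. intros H. unfold reduced_count. rewrite gen_S. replace (S m - S j)%nat with (m - j)%nat by lia.
  induction ts; simpl; auto. rewrite filter_app, length_app, plus_INR, IHts. auto. Qed.
Lemma rc_0 n t : INR (reduced_count n 0 t) = if reaches n t then 1 else 0.
Proof. unfold reduced_count. rewrite gen_0. simpl. rewrite Nat.sub_0_r. destruct (reaches n t); simpl; lra. Qed.

Lemma prodW_nonneg {A} (f : A -> R) ts : (forall x, 0 <= f x) -> 0 <= prodW f ts.
Proof. intros H; induction ts; simpl. lra. apply Rmult_le_pos; auto. Qed.

Section T.
Variable rho : nat -> R.
Hypothesis Hnn : forall k, 0 <= rho k.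

Lemma W_nonneg n t : 0 <= gw_weight rho n t.
Proof. revert t; induction n; intros [ts]. rewrite W_0; lra. rewrite W_S.
  apply Rmult_le_pos; auto. apply prodW_nonneg; auto. Qed.

Fixpoint U (D n : nat) : list tree :=
  match n with O => [Node nil] | S m => flat_map (fun k => map Node (tuples k (U D m))) (seq 0 (S D)) end.

Fixpoint deg_le (D n : nat) (t : tree) : Prop :=
  match n, t with O, _ => True | S m, Node ts => (length ts <= D)%nat /\ Forall (deg_le D m) ts end.

Lemma U_in D n t : trunc_ok n t -> deg_le D n t -> In t (U D n).
Proof.
  revert t; induction n; intros [ts] Ht Hd.
  - apply trunc_0 in Ht. rewrite Ht. left; auto.
  - cbn [U]. apply in_flat_map. apply trunc_S in Ht. destruct Hd as [Hl Hd].
    exists (length ts). split. apply in_seq; lia. apply in_map. apply tuples_in. split; auto.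
    rewrite Forall_forall in *. intros x Hx. apply IHn; auto.
Qed.

Lemma U_trunc D n t : In t (U D n) -> trunc_ok n t.
Proof.
  revert t; induction n; intros t H; cbn [U] in H.
  - destruct H as [<-|[]]. simpl; auto.
  - apply in_flat_map in H. destruct H as [k [_ H]]. apply in_map_iff in H.
    destruct H as [ts [<- H]]. apply tuples_in in H. destruct H as [_ H].
    apply trunc_S. rewrite Forall_forall in *. intros; auto.
Qed.

Lemma deg_mono D D' n t : (D <= D')%nat -> deg_le D n t -> deg_le D' n t.
Proof. revert t; induction n; intros [ts] HD H; simpl in *; auto. destruct H as [H1 H2]. split. lia.
  rewrite Forall_forall in *. intros; auto. Qed.

Lemma deg_exists n t : exists D, deg_le D n t.
Proof.
  revert t; induction n; intros [ts]. exists 0%nat; simpl; auto.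
  assert (exists D, Forall (deg_le D n) ts) as [D HD].
  { induction ts. exists 0%nat; constructor. destruct IHts as [D HD]. destruct (IHn a) as [D' HD'].
    exists (Nat.max D D'). constructor. eapply deg_mono; [|eauto]; lia.
    rewrite Forall_forall in *. intros; eapply deg_mono; [|eauto]; lia. }
  exists (Nat.max D (length ts)). simpl. split. lia. rewrite Forall_forall in *. intros; eapply deg_mono; [|eauto]; lia.
Qed.

Lemma deg_exists_list n L : exists D, Forall (deg_le D n) L.
Proof.
  induction L. exists 0%nat; constructor. destruct IHL as [D HD]. destruct (deg_exists n a) as [D' HD'].
  exists (Nat.max D D'). constructor. eapply deg_mono; [|eauto]; lia.
  rewrite Forall_forall in *. intros; eapply deg_mono; [|eauto]; lia.
Qed.

Lemma NoDup_tuples {A} k (l : list A) : NoDup l -> NoDup (tuples k l).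
Proof.
  intros Hl; induction k; simpl. constructor; auto. constructor.
  apply NoDup_flat_map'; auto.
  - intros x _. apply FinFun.Injective_map_NoDup; auto. intros a b H; inversion H; auto.
  - intros x y z _ _ Hxy H1 H2. apply in_map_iff in H1, H2. destruct H1 as [a [<- _]]. destruct H2 as [b [Hb _]].
    inversion Hb; auto.
Qed.

Lemma NoDup_U D n : NoDup (U D n).
Proof.
  induction n; cbn [U]. constructor; auto. constructor.
  apply NoDup_flat_map'. apply seq_NoDup.
  - intros k _. apply FinFun.Injective_map_NoDup. intros a b H; inversion H; auto. apply NoDup_tuples; auto.
  - intros x y z _ _ Hxy H1 H2. apply in_map_iff in H1, H2. destruct H1 as [a [<- Ha]]. destruct H2 as [b [Hb Hb']].
    inversion Hb; subst. apply tuples_in in Ha, Hb'. destruct Ha, Hb'. congruence.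
Qed.
End T.

End M_C.
Import M_C.

Module M_D.

Definition ind (b : bool) : R := if b then 1 else 0.

Lemma prodW_exists {A} (f : A -> R) (r : A -> bool) ts :
  prodW f ts * ind (existsb r ts) = prodW f ts - prodW (fun c => f c * ind (negb (r c))) ts.
Proof.
  induction ts; simpl. unfold ind; simpl; lra.
  destruct (r a); simpl; unfold ind in *; simpl. lra.
  rewrite Rmult_assoc, IHts. lra.
Qed.

Lemma tuples_sumZ {A} (w z : A -> R) k l :
  (forall x, 0 <= w x) -> (forall x, 0 <= z x) -> ls w l <= 1 ->
  ls (fun ts => prodW w ts * ls z ts) (tuples k l) <= INR k * ls (fun x => w x * z x) l.
Proof.
  intros Hw Hz Hl. assert (Hm : 0 <= ls w l) by (apply ls_nonneg; auto).
  assert (Hmu : 0 <= ls (fun x => w x * z x) l) by (apply ls_nonneg; intros; apply Rmult_le_pos; auto).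
  induction k. simpl. lra. cbn [tuples].
  rewrite ls_flat_map.
  transitivity (ls (fun x => w x * z x * ls w l ^ k + w x * (INR k * ls (fun x => w x * z x) l)) l).
  - apply ls_le. intros x _. rewrite ls_map. simpl.
    transitivity (ls (fun ts => w x * z x * prodW w ts + w x * (prodW w ts * ls z ts)) (tuples k l)).
    + right. apply ls_ext. intros; lra.
    + rewrite ls_plus, ls_scal, ls_scal, tuples_prod. apply Rplus_le_compat_l.
      apply Rmult_le_compat_l; auto.
  - rewrite ls_plus. rewrite (ls_ext (fun x => w x * z x * ls w l ^ k) (fun x => ls w l ^ k * (w x * z x))) by (intros; lra).
    rewrite (ls_ext (fun x => w x * (INR k * ls (fun x0 => w x0 * z x0) l)) (fun x => (INR k * ls (fun x0 => w x0 * z x0) l) * w x)) by (intros; lra).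
    rewrite !ls_scal.
    assert (ls w l ^ k <= 1) by (rewrite <- (pow1 k); apply pow_incr; lra).
    pose proof (pos_INR k). rewrite S_INR.
    assert (ls w l ^ k * ls (fun x => w x * z x) l <= ls (fun x => w x * z x) l) by nra.
    assert (INR k * ls (fun x => w x * z x) l * ls w l <= INR k * ls (fun x => w x * z x) l).
    { rewrite <- (Rmult_1_r (INR k * _)) at 2. apply Rmult_le_compat_l; auto. apply Rmult_le_pos; auto. }
    lra.
Qed.

Section S.
Variable rho : nat -> R.
Hypothesis Hnn : forall k, 0 <= rho k.
Hypothesis Hp1 : forall D, sum_f_R0 rho D <= 1.
Hypothesis Hm1 : forall D, sum_f_R0 (fun k => INR k * rho k) D <= 1.

Lemma sumU_S (F : tree -> R) (H : list tree -> R) D m :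
  (forall ts, F (Node ts) = rho (length ts) * H ts) ->
  ls F (U D (S m)) = sum_f_R0 (fun k => rho k * ls H (tuples k (U D m))) D.
Proof.
  intros HF. cbn [U]. rewrite ls_flat_map, <- ls_seq. apply ls_ext. intros k _.
  rewrite ls_map, <- ls_scal. apply ls_ext. intros ts Hts. rewrite HF.
  apply tuples_in in Hts. destruct Hts as [-> _]. auto.
Qed.

Definition mass D n := ls (gw_weight rho n) (U D n).
Definition surv D n := ls (fun t => gw_weight rho n t * ind (reaches n t)) (U D n).

Lemma mass_0 D : mass D 0 = 1.
Proof. unfold mass. simpl. lra. Qed.
Lemma surv_0 D : surv D 0 = 1.
Proof. unfold surv. simpl. unfold ind. simpl. lra. Qed.

Lemma mass_S D m : mass D (S m) = sum_f_R0 (fun k => rho k * mass D m ^ k) D.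
Proof.
  unfold mass. rewrite (sumU_S _ (prodW (gw_weight rho m))). 2:{ intros; apply W_S. }
  apply sum_eq. intros k _. rewrite tuples_prod. auto.
Qed.

Lemma surv_S D m : surv D (S m) =
  sum_f_R0 (fun k => rho k * (mass D m ^ k - (mass D m - surv D m) ^ k)) D.
Proof.
  unfold surv. rewrite (sumU_S _ (fun ts => prodW (gw_weight rho m) ts - prodW (fun c => gw_weight rho m c * ind (negb (reaches m c))) ts)).
  2:{ intros ts. rewrite W_S, reaches_S, Rmult_assoc, prodW_exists. auto. }
  apply sum_eq. intros k _. rewrite ls_minus, !tuples_prod. f_equal. f_equal. f_equal.
  unfold mass. rewrite <- ls_minus. apply ls_ext. intros t _. destruct (reaches m t); unfold ind; simpl; lra.
Qed.

Lemma mass_bounds D n : 0 <= mass D n <= 1.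
Proof.
  induction n. rewrite mass_0; lra. rewrite mass_S. split.
  - apply cond_pos_sum. intros; apply Rmult_le_pos; auto. apply pow_le; lra.
  - eapply Rle_trans; [|apply (Hp1 D)]. apply sum_Rle. intros k _.
    rewrite <- (Rmult_1_r (rho k)) at 2. apply Rmult_le_compat_l; auto.
    rewrite <- (pow1 k); apply pow_incr; lra.
Qed.

Lemma surv_bounds D n : 0 <= surv D n <= mass D n.
Proof.
  unfold surv, mass. split. apply ls_nonneg. intros; apply Rmult_le_pos. apply W_nonneg; auto. unfold ind; destruct reaches; lra.
  apply ls_le. intros t _. pose proof (W_nonneg rho Hnn n t). unfold ind; destruct reaches; lra.
Qed.

Lemma Zsum D p j :
  ls (fun t => gw_weight rho (p + j) t * INR (reduced_count (p + j) j t)) (U D (p + j)) <= surv D p.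
Proof.
  induction j.
  - rewrite Nat.add_0_r. unfold surv. right. apply ls_ext. intros t _. rewrite rc_0. auto.
  - replace (p + S j)%nat with (S (p + j)) by lia.
    rewrite (sumU_S _ (fun ts => prodW (gw_weight rho (p + j)) ts * ls (fun c => INR (reduced_count (p + j) j c)) ts)).
    2:{ intros ts. rewrite W_S, rc_S by lia. lra. }
    set (mu := ls (fun t => gw_weight rho (p + j) t * INR (reduced_count (p + j) j t)) (U D (p + j))) in *.
    assert (Hmu : 0 <= mu). { apply ls_nonneg. intros; apply Rmult_le_pos. apply W_nonneg; auto. apply pos_INR. }
    apply Rle_trans with (sum_f_R0 (fun k => INR k * rho k) D * mu).
    + rewrite Rmult_comm, scal_sum. apply sum_Rle. intros k _.
      rewrite (Rmult_comm (INR k)), Rmult_assoc. apply Rmult_le_compat_l; auto.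
      apply tuples_sumZ. intros; apply W_nonneg; auto. intros; apply pos_INR.
      apply (mass_bounds D (p + j)).
    + pose proof (Hm1 D). nra.
Qed.
End S.

End M_D.
Import M_D.

Module M_E.

Lemma ln_le_m1 y : 0 < y -> ln y <= y - 1.
Proof. intros H. pose proof (exp_ineq1_le (ln y)). rewrite exp_ln in H0; auto. lra. Qed.
Lemma ln_mono x y : 0 < x -> x <= y -> ln x <= ln y.
Proof. intros H1 [H2|H2]. left; apply ln_increasing; auto. subst; lra. Qed.
Lemma ln_div' x y : 0 < x -> 0 < y -> ln (x / y) = ln x - ln y.
Proof. intros; unfold Rdiv; rewrite ln_mult, ln_Rinv; try lra. apply Rinv_0_lt_compat; auto. Qed.
Lemma ln_nonneg x : 1 <= x -> 0 <= ln x.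
Proof. intros; rewrite <- ln_1; apply ln_mono; lra. Qed.

Lemma partial_le (a : nat -> R) l : (forall k, 0 <= a k) -> infinite_sum a l -> forall D, sum_f_R0 a D <= l.
Proof. intros Ha Hl D. apply (growing_ineq (sum_f_R0 a)); auto. intro n; simpl. pose proof (Ha (S n)); lra. Qed.

Lemma inf_sum_minus a b A B : infinite_sum a A -> infinite_sum b B ->
  infinite_sum (fun k => a k - b k) (A - B).
Proof. intros Ha Hb. intros eps He. destruct (CV_minus _ _ _ _ Ha Hb eps He) as [N HN].
  exists N; intros n Hn. rewrite minus_sum. apply HN; auto. Qed.

Lemma inf_sum_le a b A B : infinite_sum a A -> infinite_sum b B -> (forall k, a k <= b k) -> A <= B.
Proof. intros Ha Hb H. pose proof (partial_le (fun k => b k - a k) (B - A)) as P.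
  assert (0 <= B - A). { eapply Rle_trans; [|apply P with (D := 0%nat)]. simpl. pose proof (H 0%nat); lra.
    intros k; pose proof (H k); lra. apply inf_sum_minus; auto. } lra.
  Unshelve. all: auto. Qed.

Lemma inf_sum_scal c a A : infinite_sum a A -> infinite_sum (fun k => c * a k) (c * A).
Proof. intros Ha eps He. assert (Hc : Un_cv (fun _ => c) c).
  { intros e He'; exists 0%nat; intros; unfold Rdist; rewrite Rminus_diag, Rabs_R0; lra. }
  destruct (CV_mult _ _ _ _ Hc Ha eps He) as [N HN]. exists N; intros n Hn.
  replace (sum_f_R0 (fun k => c * a k) n) with (c * sum_f_R0 a n). apply HN; auto.
  clear. induction n; simpl; lra. Qed.

Lemma inf_sum_ext a b A : (forall k, a k = b k) -> infinite_sum a A -> infinite_sum b A.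
Proof. intros H Ha eps He. destruct (Ha eps He) as [N HN]. exists N; intros n Hn.
  rewrite <- (sum_eq a b); auto. Qed.

Lemma pow_diff_le a b k : 0 <= a <= 1 -> 0 <= b <= 1 -> a ^ k - b ^ k <= INR k * Rabs (a - b).
Proof.
  intros Ha Hb. induction k. simpl; lra.
  rewrite S_INR. simpl.
  assert (0 <= b ^ k <= 1). { split. apply pow_le; lra. rewrite <- (pow1 k); apply pow_incr; lra. }
  assert (a * (a ^ k - b ^ k) <= INR k * Rabs (a - b)).
  { destruct (Rle_dec 0 (a ^ k - b ^ k)). nra. pose proof (pos_INR k). pose proof (Rabs_pos (a-b)). nra. }
  assert (b ^ k * (a - b) <= Rabs (a - b)). { pose proof (Rle_abs (a-b)). pose proof (Rabs_pos (a-b)). 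
    destruct (Rle_dec 0 (a - b)). nra. nra. }
  replace (a * a ^ k - b * b ^ k) with (a * (a ^ k - b ^ k) + b ^ k * (a - b)) by ring. lra.
Qed.

Lemma pow_gap_mono s a b k : 0 <= s -> s <= a -> a <= b -> a ^ k - (a - s) ^ k <= b ^ k - (b - s) ^ k.
Proof.
  intros Hs Ha Hb. induction k. simpl; lra. simpl.
  assert (0 <= (a - s) ^ k <= (b - s) ^ k). { split. apply pow_le; lra. apply pow_incr; lra. }
  assert (0 <= a ^ k - (a - s) ^ k). { assert ((a - s) ^ k <= a ^ k) by (apply pow_incr; lra). lra. }
  replace (a * a ^ k - (a - s) * (a - s) ^ k) with (a * (a ^ k - (a - s) ^ k) + s * (a - s) ^ k) by ring.
  replace (b * b ^ k - (b - s) * (b - s) ^ k) with (b * (b ^ k - (b - s) ^ k) + s * (b - s) ^ k) by ring.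
  nra.
Qed.

Lemma ratio_term x y k : 0 < x -> x <= y -> y <= 1 ->
  x * (1 - (1 - y) ^ k) <= y * (1 - (1 - x) ^ k).
Proof.
  intros Hx Hxy Hy. induction k. simpl; lra. simpl.
  assert (0 <= (1 - y) ^ k <= (1 - x) ^ k). { split. apply pow_le; lra. apply pow_incr; lra. }
  assert (x*y*(1-y)^k <= x*y*(1-x)^k) by (apply Rmult_le_compat_l; nra).
  lra.
Qed.

Lemma pow_le1 a k : 0 <= a <= 1 -> a ^ k <= 1.
Proof. intros H; induction k; simpl. lra. nra. Qed.

End M_E.
Import M_E.

Module M_F.

Section Q.
Variables (alpha : R) (rho : nat -> R) (L : R -> R).
Hypothesis Halpha : 1 < alpha <= 2.
Hypothesis Hnonneg : forall k, 0 <= rho k.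
Hypothesis Hprob : infinite_sum rho 1.
Hypothesis Hmean : infinite_sum (fun k => INR k * rho k) 1.
Hypothesis HL : slowly_varying_0 L.
Hypothesis Hgf : forall s, 0 <= s < 1 ->
     infinite_sum (fun k => rho k * s ^ k) (s + Rpower (1 - s) alpha * L (1 - s)).

Definition g x := Rpower x alpha * L x.
Definition Gs x := x - g x.
Definition h x := g x / x.

Lemma G_series x : 0 < x <= 1 -> infinite_sum (fun k => rho k * (1 - (1 - x) ^ k)) (Gs x).
Proof.
  intros Hx. pose proof (Hgf (1 - x) ltac:(lra)) as H. replace (1 - (1 - x)) with x in H by ring.
  pose proof (inf_sum_minus _ _ _ _ Hprob H) as H2. unfold Gs, g.
  replace (x - Rpower x alpha * L x) with (1 - (1 - x + Rpower x alpha * L x)) by ring.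
  eapply inf_sum_ext; [|exact H2]. intros k; simpl; ring.
Qed.

Lemma exists_pos : exists k, (1 <= k)%nat /\ 0 < rho k.
Proof.
  apply NNPP; intro Hn.
  assert (Hz : forall k, (1 <= k)%nat -> rho k = 0).
  { intros k Hk. destruct (Rle_lt_dec (rho k) 0). pose proof (Hnonneg k); lra. exfalso; apply Hn; eauto. }
  assert (forall D, sum_f_R0 (fun k => INR k * rho k) D = 0).
  { induction D. simpl; lra. simpl. rewrite IHD, Hz by lia. lra. }
  assert (Hc : infinite_sum (fun k => INR k * rho k) 0).
  { intros e He; exists 0%nat; intros; rewrite H; unfold Rdist; rewrite Rminus_diag, Rabs_R0; lra. }
  pose proof (UL_sequence _ _ _ Hmean Hc). lra.
Qed.

Lemma L_pos x : 0 < x <= 1 -> 0 < L x.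
Proof. destruct HL as [H _]. auto. Qed.

Lemma h_pos x : 0 < x <= 1 -> 0 < h x.
Proof. intros Hx. unfold h, g, Rpower. apply Rdiv_lt_0_compat; [|lra]. apply Rmult_lt_0_compat. apply exp_pos. apply L_pos; auto. Qed.

Lemma h_eq x : 0 < x -> h x = 1 - Gs x / x.
Proof. intros; unfold h, Gs. field. lra. Qed.

Lemma h_mono x y : 0 < x -> x <= y -> y <= 1 -> h x <= h y.
Proof.
  intros Hx Hxy Hy. rewrite !h_eq by lra.
  assert (x * Gs y <= y * Gs x).
  { eapply inf_sum_le. apply inf_sum_scal, G_series; lra. apply inf_sum_scal, G_series; lra.
    intros k; simpl. pose proof (ratio_term x y k Hx Hxy Hy). pose proof (Hnonneg k). nra. }
  assert (Gs y / y <= Gs x / x).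
  { apply Rmult_le_reg_l with (x * y). nra. replace (x * y * (Gs y / y)) with (x * Gs y) by (field; lra).
    replace (x * y * (Gs x / x)) with (y * Gs x) by (field; lra). lra. }
  lra.
Qed.

Definition c1 := h 1.
Lemma c1_lt : c1 < 1.
Proof.
  destruct exists_pos as [k [Hk Hr]]. unfold c1. rewrite h_eq by lra.
  assert (Ht : forall j, 0 <= rho j * (1 - (1 - 1) ^ j)).
  { intros j. replace (1 - 1) with 0 by ring. destruct j; simpl. lra. rewrite Rmult_0_l. pose proof (Hnonneg (S j)). lra. }
  pose proof (partial_le _ _ Ht (G_series 1 ltac:(lra)) k) as P.
  destruct k; [lia|]. simpl in P.
  assert (0 <= sum_f_R0 (fun k => rho k * (1 - (1 - 1) ^ k)) k) by (apply cond_pos_sum; auto).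
  replace (1 - 1) with 0 in P by ring. simpl in P. rewrite Rmult_0_l in P.
  unfold Rdiv. rewrite Rinv_1.
  replace (1 - 1) with 0 in H by ring. lra.
Qed.

Lemma slow_half : exists delta theta, 0 < delta <= 1 /\ 0 < theta < 1 /\
  forall x, 0 < x <= delta -> h (x / 2) <= theta * h x.
Proof.
  destruct HL as [HLp HLs].
  set (c0 := 2 * Rpower (/2) alpha).
  assert (Hc0 : 0 < c0 < 1).
  { unfold c0, Rpower. split. pose proof (exp_pos (alpha * ln (/2))); lra.
    assert (ln (/2) < 0). { rewrite ln_Rinv by lra. pose proof (ln_increasing 1 2 ltac:(lra) ltac:(lra)). rewrite ln_1 in H. lra. }
    assert (exp (alpha * ln (/ 2)) < exp (ln (/2))). { apply exp_increasing. nra. }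
    rewrite exp_ln in H0 by lra. lra. }
  set (eps := (1 - c0) / (2 * c0)).
  assert (Heps : 0 < eps) by (unfold eps; apply Rdiv_lt_0_compat; lra).
  destruct (HLs (/2) ltac:(lra) eps Heps) as [d [Hd Hx]].
  exists (Rmin d 1 / 2), (c0 * (1 + eps)). split. split. apply Rdiv_lt_0_compat; [apply Rmin_glb_lt; lra|lra].
  pose proof (Rmin_r d 1); lra. split. split. nra. unfold eps. field_simplify; lra.
  intros x Hxr. pose proof (Rmin_l d 1). pose proof (Rmin_r d 1).
  assert (Hx1 : 0 < x <= 1) by lra.
  specialize (Hx x ltac:(lra)). apply Rabs_def2 in Hx. destruct Hx as [Hx _].
  pose proof (L_pos x Hx1). pose proof (L_pos (/2 * x) ltac:(lra)).
  assert (L (/2 * x) <= (1 + eps) * L x).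
  { assert (L (/2 * x) / L x < 1 + eps) by lra.
    apply Rmult_le_reg_r with (/ L x). apply Rinv_0_lt_compat; lra.
    replace ((1 + eps) * L x * / L x) with (1 + eps) by (field; lra). unfold Rdiv in H2. lra. }
  unfold h, g. replace (x / 2) with (/ 2 * x) by field.
  rewrite <- Rpower_mult_distr by lra.
  assert (Hp : 0 < Rpower x alpha) by (unfold Rpower; apply exp_pos).
  assert (Hq : 0 < Rpower (/2) alpha) by (unfold Rpower; apply exp_pos).
  unfold c0. apply Rmult_le_reg_r with x. lra.
  replace (Rpower (/ 2) alpha * Rpower x alpha * L (/ 2 * x) / (/ 2 * x) * x) with (2 * Rpower (/ 2) alpha * Rpower x alpha * L (/ 2 * x)) by (field; lra).
  replace (2 * Rpower (/ 2) alpha * (1 + eps) * (Rpower x alpha * L x / x) * x) with (2 * Rpower (/ 2) alpha * Rpower x alpha * ((1 + eps) * L x)) by (field; lra).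
  apply Rmult_le_compat_l; auto. nra.
Qed.

Fixpoint q (n : nat) : R := match n with O => 1 | S m => q m - g (q m) end.

Lemma q_S_eq n : 0 < q n -> q (S n) = q n * (1 - h (q n)).
Proof. intros H. simpl. unfold h. field. lra. Qed.

Lemma h_le_c1 x : 0 < x <= 1 -> 0 < h x <= c1.
Proof. intros Hx. split. apply h_pos; auto. unfold c1. apply h_mono; lra. Qed.

Lemma q_props n : 0 < q n <= 1.
Proof.
  induction n. simpl; lra. rewrite q_S_eq by lra. pose proof (h_le_c1 _ IHn). pose proof c1_lt.
  split. apply Rmult_lt_0_compat; lra. nra.
Qed.

Lemma d_bounds n : 0 < h (q n) <= c1.
Proof. apply h_le_c1, q_props. Qed.

Lemma q_S_le n : q (S n) <= q n.
Proof. pose proof (q_props n). pose proof (d_bounds n). rewrite q_S_eq by lra. nra. Qed.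

Lemma q_dec k m : (k <= m)%nat -> q m <= q k.
Proof. induction 1. lra. pose proof (q_S_le m). lra. Qed.

Lemma q_small delta : 0 < delta <= 1 -> exists m0, (1 <= m0)%nat /\ forall m, (m0 <= m)%nat -> q m <= delta.
Proof.
  intros Hd. set (eta := h delta). assert (He : 0 < eta <= c1) by (apply h_le_c1; lra).
  pose proof c1_lt.
  assert (Hc : forall m, delta < q m -> q m <= (1 - eta) ^ m).
  { induction m; intros Hm. simpl; lra.
    pose proof (q_S_le m). pose proof (q_props m).
    assert (h delta <= h (q m)) by (apply h_mono; lra).
    rewrite q_S_eq in * by lra. simpl. assert (q m <= (1 - eta) ^ m) by (apply IHm; lra).
    unfold eta in *. nra. }
  destruct (pow_lt_1_zero (1 - eta) ltac:(rewrite Rabs_right; lra) delta ltac:(lra)) as [N HN].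
  exists (S N). split. lia. intros m Hm. destruct (Rle_lt_dec (q m) delta); auto.
  exfalso. specialize (Hc m r). specialize (HN m ltac:(lia)).
  rewrite Rabs_right in HN. lra. apply Rle_ge, pow_le; lra.
Qed.

Lemma potential k j : INR j * h (q (k + j)) <= ln (q k / q (k + j)).
Proof.
  induction j. rewrite Nat.add_0_r. unfold Rdiv. rewrite Rinv_r, ln_1. simpl; lra. pose proof (q_props k); lra.
  replace (k + S j)%nat with (S (k + j)) by lia.
  pose proof (q_props (k + j)). pose proof (q_props k). pose proof (d_bounds (k + j)). pose proof c1_lt.
  pose proof (q_S_le (k + j)). pose proof (q_props (S (k + j))).
  assert (h (q (S (k + j))) <= h (q (k + j))) by (apply h_mono; lra).
  rewrite S_INR.
  replace (q k / q (S (k + j))) with ((q k / q (k + j)) * / (1 - h (q (k + j)))).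
  2:{ rewrite q_S_eq by lra. field. split; lra. }
  rewrite ln_mult. rewrite ln_Rinv by lra.
  pose proof (ln_le_m1 (1 - h (q (k + j))) ltac:(lra)).
  pose proof (pos_INR j). nra.
  apply Rdiv_lt_0_compat; lra. apply Rinv_0_lt_compat; lra.
Qed.

Lemma halve_exists N : forall x y, 0 < y -> y <= x -> x * (/2) ^ N < y ->
  exists J, x * (/2) ^ (S J) < y /\ y <= x * (/2) ^ J.
Proof.
  induction N; intros x y Hy Hyx HN. simpl in HN; lra.
  destruct (Rlt_le_dec (x * /2) y).
  - exists 0%nat. simpl. split; lra.
  - destruct (IHN (x * /2) y Hy r) as [J [H1 H2]]. simpl in HN. replace (x * / 2 * (/ 2) ^ N) with (x * (/ 2 * (/ 2) ^ N)) by ring. auto.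
    exists (S J). replace (x * (/ 2) ^ S (S J)) with (x * / 2 * (/2) ^ (S J)) by (simpl; ring).
    replace (x * (/ 2) ^ S J) with (x * / 2 * (/2) ^ J) by (simpl; ring). auto.
Qed.

Lemma halve y x : 0 < y -> y <= x -> exists J, x * (/2) ^ (S J) < y /\ y <= x * (/2) ^ J.
Proof.
  intros Hy Hyx. destruct (pow_lt_1_zero (/2) ltac:(rewrite Rabs_right; lra) (y / x) ltac:(apply Rdiv_lt_0_compat; lra)) as [N HN].
  apply (halve_exists N); auto. specialize (HN N (le_n _)). rewrite Rabs_right in HN.
  apply Rmult_lt_compat_l with (r := x) in HN; [|lra]. replace (x * (y / x)) with y in HN by (field; lra). lra.
  apply Rle_ge, pow_le; lra.
Qed.

Lemma theta_iter delta theta : 0 < delta <= 1 -> 0 < theta < 1 ->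
  (forall x, 0 < x <= delta -> h (x / 2) <= theta * h x) ->
  forall J x, 0 < x <= delta -> h (x * (/2) ^ J) <= theta ^ J * h x.
Proof.
  intros Hd Ht Hh J. induction J; intros x Hx. simpl. rewrite Rmult_1_r. lra.
  assert (0 < (/2) ^ J <= 1). { split. apply pow_lt; lra. rewrite <- (pow1 J). apply pow_incr; lra. }
  replace (x * (/ 2) ^ S J) with ((x * (/2) ^ J) / 2) by (simpl; field).
  eapply Rle_trans. apply Hh. split. apply Rmult_lt_0_compat; lra. nra.
  specialize (IHJ x Hx). simpl. nra.
Qed.

Lemma ln_tangent y a : 0 < y -> 0 < a -> ln y <= y / a + ln a - 1.
Proof. intros. pose proof (ln_le_m1 (y / a) ltac:(apply Rdiv_lt_0_compat; lra)).
  rewrite ln_div' in H1 by lra. lra. Qed.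

Lemma B_bound : exists M, 0 < M /\ forall m, INR m * h (q m) <= M.
Proof.
  destruct slow_half as [delta [theta [Hd [Ht Hh]]]].
  destruct (q_small delta Hd) as [m0 [Hm0 Hq]].
  pose proof c1_lt. pose proof (theta_iter delta theta Hd Ht Hh) as Hit.
  set (lam := - ln theta).
  assert (Hlam : 0 < lam). { unfold lam. pose proof (ln_increasing theta 1 ltac:(lra) ltac:(lra)). rewrite ln_1 in H0. lra. }
  assert (Hl2 : 0 < ln 2). { pose proof (ln_increasing 1 2 ltac:(lra) ltac:(lra)). rewrite ln_1 in H0. lra. }
  set (a := 12 * ln 2 / lam).
  assert (Ha : 0 < a) by (unfold a; apply Rdiv_lt_0_compat; lra).
  set (M := 1 + 2 * INR m0 + 4 * ln 2 + (4 * ln 2 / lam) * Rabs (ln a)).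
  assert (HM1 : 1 + 2 * INR m0 <= M). { unfold M. assert (0 <= 4 * ln 2 / lam * Rabs (ln a)).
    apply Rmult_le_pos. apply Rlt_le, Rdiv_lt_0_compat; lra. apply Rabs_pos. lra. }
  assert (Hfix : 2 * ln 2 * (1 + ln (3 * M) / lam) <= M).
  { pose proof (ln_tangent (3 * M) a ltac:(pose proof (pos_INR m0); lra) Ha).
    pose proof (Rle_abs (ln a)).
    assert (2 * ln 2 * (ln (3 * M) / lam) <= 2 * ln 2 / lam * (3 * M / a + Rabs (ln a))).
    { unfold Rdiv. rewrite (Rmult_comm (ln (3 * M))). rewrite <- Rmult_assoc.
      apply Rmult_le_compat_l. apply Rmult_le_pos. lra. left; apply Rinv_0_lt_compat; lra. lra. }
    assert (2 * ln 2 / lam * (3 * M / a) = M / 2). { unfold a. field. split; lra. }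
    set (X := 2 * ln 2 / lam * Rabs (ln a)) in *.
    assert (HX : 4 * ln 2 / lam * Rabs (ln a) = 2 * X) by (unfold X; field; lra).
    assert (HMd : M = 1 + 2 * INR m0 + 4 * ln 2 + 2 * X) by (unfold M; rewrite HX; ring).
    rewrite Rmult_plus_distr_l in H2. pose proof (pos_INR m0). nra. }
  exists M. split. pose proof (pos_INR m0); lra.
  intros m. induction m as [m IH] using (well_founded_induction Wf_nat.lt_wf).
  destruct (Compare_dec.le_lt_dec (2 * m0) m) as [Hm|Hm].
  - set (k := (m / 2)%nat).
    assert (Hk1 : (m0 <= k)%nat) by (unfold k; apply Nat.div_le_lower_bound; lia).
    assert (Hk2 : (2 * k <= m <= 2 * k + 1)%nat) by (unfold k; split; [apply Nat.Div0.mul_div_le; lia|]; pose proof (Nat.div_mod m 2 ltac:(lia)); pose proof (Nat.mod_upper_bound m 2 ltac:(lia)); lia).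
    assert (HBk : INR k * h (q k) <= M) by (apply IH; lia).
    set (x := q k). set (y := q m).
    assert (Hx : 0 < x <= delta). { split. apply q_props. apply Hq; lia. }
    assert (Hy : 0 < y <= x). { split. apply q_props. apply q_dec; lia. }
    destruct (halve y x ltac:(lra) ltac:(lra)) as [J [HJ1 HJ2]].
    assert (Hp2 : 0 < (/2) ^ J) by (apply pow_lt; lra).
    assert (Hdm : h y <= theta ^ J * h x).
    { eapply Rle_trans; [|apply Hit; auto]. apply h_mono; try lra. assert ((/2)^J <= 1) by (rewrite <- (pow1 J); apply pow_incr; lra). nra. }
    pose proof (potential k (m - k)) as Hpot. replace (k + (m - k))%nat with m in Hpot by lia.
    fold x y in Hpot.
    assert (Hu : ln (x / y) < INR (S J) * ln 2).
    { rewrite <- ln_pow by lra. apply ln_increasing. apply Rdiv_lt_0_compat; lra.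
      simpl in HJ1. apply Rmult_lt_reg_r with (y * (/2) ^ (S J)). apply Rmult_lt_0_compat; [lra|apply pow_lt; lra].
      replace (x / y * (y * (/ 2) ^ S J)) with (x * (/2) ^ (S J)) by (field; lra).
      assert (Hpw : 2 ^ S J * (/ 2) ^ S J = 1) by (rewrite <- Rpow_mult_distr; replace (2 * /2) with 1 by field; apply pow1).
      replace (2 ^ S J * (y * (/ 2) ^ S J)) with (y * (2 ^ S J * (/ 2) ^ S J)) by ring. rewrite Hpw. simpl in *. lra. }
    assert (Hdpos : 0 < h y) by (apply h_pos; lra).
    assert (HA : INR m * h y <= 2 * (INR (m - k) * h y)).
    { rewrite minus_INR by lia. assert (INR m <= 2 * (INR m - INR k)). { assert (INR (2 * k) <= INR m) by (apply le_INR; lia). rewrite mult_INR in H0. simpl in H0. lra. } nra. }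
    assert (HB : INR m * h y <= 3 * theta ^ J * (INR k * h x)).
    { assert (INR m <= 3 * INR k). { assert (INR m <= INR (3 * k)) by (apply le_INR; lia). rewrite mult_INR in H0. simpl in H0. lra. }
      assert (0 <= theta ^ J) by (apply pow_le; lra). pose proof (pos_INR k). pose proof (h_pos x ltac:(lra)). nra. }
    fold y. destruct (Rle_lt_dec (3 * theta ^ J * M) 1).
    + assert (0 <= theta ^ J) by (apply pow_le; lra).
      assert (3 * theta ^ J * (INR k * h x) <= 3 * theta ^ J * M). apply Rmult_le_compat_l. lra. exact HBk. unfold x, y in *. pose proof (pos_INR m0). lra.
    + assert (HJ : INR J * lam < ln (3 * M)).
      { assert (0 < theta ^ J) by (apply pow_lt; lra). pose proof (pos_INR m0).
        assert (Hln : ln 1 < ln (3 * theta ^ J * M)) by (apply ln_increasing; lra). rewrite ln_1 in Hln.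
        rewrite !ln_mult in Hln by (try apply pow_lt; lra). rewrite ln_pow in Hln by lra.
        rewrite ln_mult by lra. unfold lam. lra. }
      assert (INR J < ln (3 * M) / lam). { apply Rmult_lt_reg_r with lam; auto. unfold Rdiv. rewrite Rmult_assoc, Rinv_l; lra. }
      rewrite S_INR in Hu. unfold x, y in *. pose proof (pos_INR m0). nra.
  - pose proof (d_bounds m). assert (INR m <= 2 * INR m0). { assert (INR m <= INR (2 * m0)) by (apply le_INR; lia). rewrite mult_INR in H1; simpl in H1; lra. }
    pose proof (pos_INR m). nra.
Qed.

Lemma inv_le_2ln n : (1 <= n)%nat -> / INR n <= 2 * ln (INR (S n) / INR n).
Proof.
  intros Hn. assert (1 <= INR n) by (apply (le_INR 1); lia). rewrite S_INR.
  pose proof (ln_le_m1 (INR n / (INR n + 1)) ltac:(apply Rdiv_lt_0_compat; lra)).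
  rewrite ln_div' in H0 by lra. rewrite ln_div' by lra.
  assert (INR n / (INR n + 1) - 1 = - / (INR n + 1)) by (field; lra).
  assert (/ INR n <= 2 * / (INR n + 1)). { apply Rmult_le_reg_r with (INR n * (INR n + 1)). nra.
    field_simplify; lra. }
  lra.
Qed.

Lemma q_ratio : exists K, 0 <= K /\ forall p j, (1 <= p)%nat ->
  ln (q p / q (p + j)) <= K * ln (INR (p + j) / INR p).
Proof.
  destruct B_bound as [M [HM HB]]. pose proof c1_lt.
  exists (2 * M / (1 - c1)). split. apply Rlt_le, Rdiv_lt_0_compat; lra.
  intros p j Hp. induction j.
  - rewrite Nat.add_0_r. unfold Rdiv. rewrite !Rinv_r, ln_1. lra. apply not_0_INR; lia. pose proof (q_props p); lra.
  - replace (p + S j)%nat with (S (p + j)) by lia. set (n := (p + j)%nat) in *.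
    pose proof (q_props n). pose proof (q_props p). pose proof (d_bounds n).
    assert (1 <= INR n) by (apply (le_INR 1); unfold n; lia).
    assert (1 <= INR p) by (apply (le_INR 1); lia).
    replace (q p / q (S n)) with ((q p / q n) * / (1 - h (q n))) by (rewrite q_S_eq by lra; field; split; lra).
    replace (INR (S n) / INR p) with ((INR n / INR p) * (INR (S n) / INR n)) by (field; lra).
    rewrite ln_mult, ln_mult, ln_Rinv; try lra; try (apply Rdiv_lt_0_compat; lra); try apply Rinv_0_lt_compat; try lra.
    2:{ apply Rdiv_lt_0_compat. rewrite S_INR; lra. lra. }
    pose proof (ln_le_m1 (/ (1 - h (q n))) ltac:(apply Rinv_0_lt_compat; lra)).
    rewrite ln_Rinv in H5 by lra.
    assert (Hd : / (1 - h (q n)) - 1 <= h (q n) / (1 - c1)).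
    { replace (/ (1 - h (q n)) - 1) with (h (q n) / (1 - h (q n))) by (field; lra).
      unfold Rdiv. apply Rmult_le_compat_l. lra. apply Rinv_le_contravar; lra. }
    assert (HBn : h (q n) <= M / INR n). { specialize (HB n). apply Rmult_le_reg_l with (INR n). lra. field_simplify; lra. }
    pose proof (inv_le_2ln n ltac:(unfold n; lia)).
    assert (M / INR n <= M * (2 * ln (INR (S n) / INR n))). { unfold Rdiv. apply Rmult_le_compat_l; lra. }
    assert (h (q n) / (1 - c1) <= 2 * M / (1 - c1) * ln (INR (S n) / INR n)).
    { replace (2 * M / (1 - c1) * ln (INR (S n) / INR n)) with ((M * (2 * ln (INR (S n) / INR n))) / (1 - c1)) by (field; lra).
      unfold Rdiv. apply Rmult_le_compat_r. left; apply Rinv_0_lt_compat; lra. lra. }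
    lra.
Qed.
End Q.

End M_F.
Import M_F.

Module M_G.

Section G.
Variables (alpha : R) (rho : nat -> R) (L : R -> R).
Hypothesis Halpha : 1 < alpha <= 2.
Hypothesis Hnonneg : forall k, 0 <= rho k.
Hypothesis Hprob : infinite_sum rho 1.
Hypothesis Hmean : infinite_sum (fun k => INR k * rho k) 1.
Hypothesis HL : slowly_varying_0 L.
Hypothesis Hgf : forall s, 0 <= s < 1 ->
     infinite_sum (fun k => rho k * s ^ k) (s + Rpower (1 - s) alpha * L (1 - s)).

Lemma Hp1 D : sum_f_R0 rho D <= 1.
Proof. apply partial_le; auto. Qed.
Lemma Hm1 D : sum_f_R0 (fun k => INR k * rho k) D <= 1.
Proof. apply partial_le; auto. intros; apply Rmult_le_pos; auto; apply pos_INR. Qed.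

Definition tau D := 1 - sum_f_R0 rho D.
Lemma tau_nonneg D : 0 <= tau D. Proof. unfold tau; pose proof (Hp1 D); lra. Qed.
Lemma tau_small eps : 0 < eps -> exists D, tau D < eps.
Proof. intros He. destruct (Hprob eps He) as [N HN]. exists N. specialize (HN N (le_n _)).
  unfold Rdist in HN. apply Rabs_def2 in HN. unfold tau. lra. Qed.

Let Gs := Gs alpha L.
Let q := q alpha L.

Lemma Gs_partial x D : 0 < x <= 1 ->
  sum_f_R0 (fun k => rho k * (1 - (1 - x) ^ k)) D <= Gs x <=
  sum_f_R0 (fun k => rho k * (1 - (1 - x) ^ k)) D + tau D.
Proof.
  intros Hx. assert (Ht : forall k, 0 <= rho k * (1 - (1 - x) ^ k)).
  { intros k; apply Rmult_le_pos; auto. assert ((1 - x) ^ k <= 1) by (apply pow_le1; lra). lra. }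
  split. apply partial_le; auto. apply G_series; auto.
  pose proof (inf_sum_minus _ _ _ _ Hprob (G_series alpha rho L Hprob Hgf x Hx)) as H2.
  assert (Ht2 : forall k, 0 <= rho k - rho k * (1 - (1 - x) ^ k)).
  { intros k. assert (0 <= (1 - x) ^ k) by (apply pow_le; lra). pose proof (Hnonneg k). nra. }
  pose proof (partial_le _ _ Ht2 H2 D). rewrite minus_sum in H. unfold tau. unfold Gs. lra.
Qed.

Lemma q_S n : q (S n) = Gs (q n). Proof. reflexivity. Qed.
Lemma qp n : 0 < q n <= 1. Proof. apply (q_props alpha rho L); auto. Qed.

Lemma surv_le_q D n : surv rho D n <= q n.
Proof.
  induction n. rewrite surv_0. simpl. lra.
  rewrite surv_S, q_S. pose proof (qp n).
  eapply Rle_trans; [|apply (Gs_partial (q n) D H)].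
  apply sum_Rle. intros k _. apply Rmult_le_compat_l; auto.
  pose proof (surv_bounds rho Hnonneg D n). pose proof (mass_bounds rho Hnonneg Hp1 D n).
  pose proof (pow_gap_mono (surv rho D n) (mass rho D n) 1 k ltac:(lra) ltac:(lra) ltac:(lra)).
  rewrite pow1 in H2. assert ((1 - q n) ^ k <= (1 - surv rho D n) ^ k) by (apply pow_incr; lra). lra.
Qed.

Lemma mass_lower D n : 1 - mass rho D n <= INR n * tau D.
Proof.
  induction n. rewrite mass_0. simpl; lra.
  rewrite mass_S, S_INR. pose proof (mass_bounds rho Hnonneg Hp1 D n).
  assert (Hk : forall k, rho k * (1 - mass rho D n ^ k) <= (1 - mass rho D n) * (INR k * rho k)).
  { intros k. pose proof (pow_diff_le 1 (mass rho D n) k ltac:(lra) ltac:(lra)). rewrite pow1, Rabs_right in H0 by lra.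
    pose proof (Hnonneg k). nra. }
  assert (sum_f_R0 (fun k => rho k * (1 - mass rho D n ^ k)) D <= (1 - mass rho D n) * sum_f_R0 (fun k => INR k * rho k) D).
  { rewrite scal_sum. apply sum_Rle. intros i _; specialize (Hk i); lra. }
  assert (sum_f_R0 (fun k => rho k * (1 - mass rho D n ^ k)) D = sum_f_R0 rho D - sum_f_R0 (fun k => rho k * mass rho D n ^ k) D).
  { rewrite <- minus_sum. apply sum_eq; intros; ring. }
  pose proof (Hm1 D). unfold tau in *. nra.
Qed.

Lemma surv_lower D n : q n - surv rho D n <= (INR n + 1) ^ 2 * tau D.
Proof.
  induction n. rewrite surv_0. simpl. pose proof (tau_nonneg D). lra.
  rewrite surv_S, q_S, S_INR. pose proof (qp n).
  pose proof (Gs_partial (q n) D H) as [_ HG].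
  pose proof (surv_bounds rho Hnonneg D n). pose proof (mass_bounds rho Hnonneg Hp1 D n).
  pose proof (surv_le_q D n). pose proof (mass_lower D n). pose proof (tau_nonneg D).
  set (M := mass rho D n) in *. set (s := surv rho D n) in *.
  assert (Hk : forall k, rho k * (1 - (1 - q n) ^ k) - rho k * (M ^ k - (M - s) ^ k) <= (2 * (1 - M) + (q n - s)) * (INR k * rho k)).
  { intros k. pose proof (pow_diff_le 1 M k ltac:(lra) ltac:(lra)). rewrite pow1, Rabs_right in H5 by lra.
    pose proof (pow_diff_le (M - s) (1 - q n) k ltac:(lra) ltac:(lra)).
    assert (Rabs (M - s - (1 - q n)) <= (1 - M) + (q n - s)) by (apply Rabs_le; lra).
    pose proof (pos_INR k).
    assert ((M - s) ^ k - (1 - q n) ^ k <= INR k * ((1 - M) + (q n - s))) by nra.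
    pose proof (Hnonneg k). nra. }
  assert (sum_f_R0 (fun k => rho k * (1 - (1 - q n) ^ k)) D - sum_f_R0 (fun k => rho k * (M ^ k - (M - s) ^ k)) D <= (2 * (1 - M) + (q n - s)) * sum_f_R0 (fun k => INR k * rho k) D).
  { rewrite <- minus_sum, scal_sum. apply sum_Rle. intros i _; specialize (Hk i); lra. }
  pose proof (Hm1 D). pose proof (pos_INR n).
  assert ((2 * (1 - M) + (q n - s)) * sum_f_R0 (fun k => INR k * rho k) D <= 2 * (1 - M) + (q n - s)).
  { assert (0 <= sum_f_R0 (fun k => INR k * rho k) D) by (apply cond_pos_sum; intros; apply Rmult_le_pos; auto; apply pos_INR). nra. }
  nra.
Qed.
End G.

End M_G.
Import M_G.

Module M_H.

Lemma Rdiv_le_0_compat a b : 0 <= a -> 0 < b -> 0 <= a / b.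
Proof. intros; unfold Rdiv; apply Rmult_le_pos; auto; left; apply Rinv_0_lt_compat; auto. Qed.

Lemma expect_bound (S : tree -> Prop) (w f z : tree -> R) Plow Zup c Mv :
  (forall t, 0 <= w t) -> (forall t, 0 <= z t) -> 0 < Mv -> 0 <= c ->
  (forall t, S t -> 0 <= f t <= c * (1 + z t / Mv)) ->
  (forall L, NoDup L -> Forall S L -> lsum w L <= 1) ->
  (forall L, NoDup L -> Forall S L -> lsum (fun t => w t * z t) L <= Zup) ->
  (exists L0, NoDup L0 /\ Forall S L0 /\ Plow <= lsum w L0) -> 0 < Plow ->
  exists A P, has_sum S (fun t => w t * f t) A /\ has_sum S w P /\
    0 <= A / P <= c * (1 + Zup / (Mv * Plow)).
Proof.
  intros Hw Hz HM Hc Hf Hm HZ [L0 [HN0 [HS0 HP0]]] HPl.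
  assert (HZ0 : 0 <= Zup) by (apply (HZ nil); constructor).
  destruct (completeness (fun s => exists L, NoDup L /\ Forall S L /\ s = lsum w L)) as [P HP].
  { exists 1. intros s [L [H1 [H2 ->]]]. auto. }
  { exists 0. exists nil. repeat split; constructor. }
  assert (Hpart : forall L, NoDup L -> Forall S L -> lsum (fun t => w t * f t) L <= c * (lsum w L + Zup / Mv)).
  { intros L H1 H2. rewrite !lsum_ls. eapply Rle_trans.
    - apply (ls_le (fun t => w t * f t) (fun t => c * (w t + (w t * z t) / Mv))).
      intros t Ht. rewrite Forall_forall in H2. specialize (Hf t (H2 t Ht)). specialize (Hw t).
      replace (c * (w t + w t * z t / Mv)) with (w t * (c * (1 + z t / Mv))) by (field; lra).
      apply Rmult_le_compat_l; lra.
    - rewrite ls_scal, ls_plus. apply Rmult_le_compat_l; auto.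
      unfold Rdiv. rewrite (ls_ext (fun x => w x * z x * / Mv) (fun x => / Mv * (w x * z x))) by (intros; ring).
      rewrite ls_scal. specialize (HZ L H1 H2). rewrite lsum_ls in HZ.
      assert (/ Mv * ls (fun x => w x * z x) L <= Zup * / Mv). { rewrite Rmult_comm. apply Rmult_le_compat_r. left; apply Rinv_0_lt_compat; auto. auto. }
      change (lsum w L) with (ls w L); lra. }
  destruct (completeness (fun s => exists L, NoDup L /\ Forall S L /\ s = lsum (fun t => w t * f t) L)) as [A HA].
  { exists (c * (1 + Zup / Mv)). intros s [L [H1 [H2 ->]]]. eapply Rle_trans. apply Hpart; auto.
    apply Rmult_le_compat_l; auto. specialize (Hm L H1 H2). lra. }
  { exists 0. exists nil. repeat split; constructor. }
  exists A, P. split; auto. split; auto.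
  assert (HPge : Plow <= P). { eapply Rle_trans; eauto. apply HP. eauto. }
  assert (HA0 : 0 <= A). { apply HA. exists nil. repeat split; constructor. }
  assert (HAle : A <= c * (P + Zup / Mv)).
  { apply HA. intros s [L [H1 [H2 ->]]]. eapply Rle_trans. apply Hpart; auto.
    apply Rmult_le_compat_l; auto. assert (lsum w L <= P) by (apply HP; eauto). lra. }
  split. apply Rdiv_le_0_compat; lra.
  apply Rmult_le_reg_r with P. lra. unfold Rdiv at 1. rewrite Rmult_assoc, Rinv_l, Rmult_1_r by lra.
  eapply Rle_trans; [apply HAle|].
  assert (Zup / (Mv * Plow) * P >= Zup / Mv).
  { replace (Zup / (Mv * Plow) * P) with (Zup / Mv * (P / Plow)) by (field; lra).
    assert (1 <= P / Plow) by (apply Rmult_le_reg_r with Plow; [lra|]; field_simplify; lra).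
    assert (0 <= Zup / Mv) by (apply Rdiv_le_0_compat; lra). nra. }
  nra.
Qed.

Lemma pointwise r Mv z : 1 <= r -> exp r <= Mv -> 0 <= z ->
  0 <= rpow (ln z) r <= Rpower (ln Mv) r * (1 + z / Mv).
Proof.
  intros Hr HM Hz. pose proof (exp_pos r).
  assert (HlM : r <= ln Mv) by (rewrite <- (ln_exp r); apply ln_mono; lra).
  assert (Hc : 0 < Rpower (ln Mv) r) by (unfold Rpower; apply exp_pos).
  assert (0 <= z / Mv) by (apply Rdiv_le_0_compat; lra).
  unfold rpow. destruct (Rle_dec (ln z) 0). split; [lra|]. nra.
  split. left; unfold Rpower; apply exp_pos.
  assert (Hz1 : 0 < z). { destruct (Rle_lt_dec z 0); auto. exfalso. assert (z = 0) by lra. subst. unfold ln in n. destruct (Rlt_dec 0 0); lra. }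
  destruct (Rle_lt_dec z Mv).
  - assert (Rpower (ln z) r <= Rpower (ln Mv) r) by (apply Rle_Rpower_l; [lra|split; [lra|apply ln_mono; lra]]). nra.
  - set (a := ln Mv) in *. set (b := ln z).
    assert (Hab : a <= b) by (apply ln_mono; lra).
    assert (r * ln b <= r * ln a + b - a).
    { pose proof (ln_le_m1 (b / a) ltac:(apply Rdiv_lt_0_compat; lra)). rewrite ln_div' in H1 by lra.
      assert (r * (b / a - 1) <= b - a). { replace (b / a - 1) with ((b - a) / a) by (field; lra).
        apply Rmult_le_reg_r with a. lra. replace (r * ((b - a) / a) * a) with (r * (b - a)) by (field; lra). nra. }
      nra. }
    assert (Rpower b r <= Rpower a r * (z / Mv)).
    { unfold Rpower. replace (z / Mv) with (exp (b - a)). rewrite <- exp_plus. 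
      destruct (Req_dec (r * ln b) (r * ln a + (b - a))) as [E|E]. rewrite E; lra. left; apply exp_increasing. lra.
      unfold Rminus. rewrite exp_plus, exp_Ropp. unfold a, b. rewrite !exp_ln by lra. auto. }
    nra.
Qed.

Lemma ls_filter {A} (f : A -> R) (b : A -> bool) l : ls f (filter b l) = ls (fun x => f x * ind (b x)) l.
Proof. induction l as [|a l IHl]; [reflexivity|].
  assert (E : forall g : A -> R, ls g (a :: l) = g a + ls g l) by reflexivity.
  rewrite E. cbn [filter]. destruct (b a); unfold ind at 1; [change (ls f (a :: filter b l)) with (f a + ls f (filter b l))|]; rewrite IHl; ring. Qed.

End M_H.
Import M_H.

Module M_I.

Lemma rpow_bound E a r : 1 <= r -> 0 < a -> E <= 2 * Rpower a r -> rpow E (/ r) <= 2 * a.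
Proof.
  intros Hr Ha HE. unfold rpow. destruct (Rle_dec E 0). lra.
  assert (Hp : 0 < Rpower a r) by (unfold Rpower; apply exp_pos).
  eapply Rle_trans. apply Rle_Rpower_l. left; apply Rinv_0_lt_compat; lra. split; [lra|exact HE].
  rewrite <- Rpower_mult_distr by lra. rewrite Rpower_mult, Rinv_r, Rpower_1 by lra.
  apply Rmult_le_compat_r. lra.
  replace 2 with (Rpower 2 1) at 2 by (apply Rpower_1; lra).
  apply Rle_Rpower. lra. rewrite <- Rinv_1. apply Rinv_le_contravar; lra.
Qed.

Section I.
Variables (alpha : R) (rho : nat -> R) (L : R -> R).
Hypothesis Halpha : 1 < alpha <= 2.
Hypothesis Hnonneg : forall k, 0 <= rho k.
Hypothesis Hprob : infinite_sum rho 1.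
Hypothesis Hmean : infinite_sum (fun k => INR k * rho k) 1.
Hypothesis HL : slowly_varying_0 L.
Hypothesis Hgf : forall s, 0 <= s < 1 ->
     infinite_sum (fun k => rho k * s ^ k) (s + Rpower (1 - s) alpha * L (1 - s)).

Let q := q alpha L.
Let qp n : 0 < q n <= 1 := q_props alpha rho L Hnonneg Hprob Hmean HL Hgf n.
Let P1 := Hp1 rho Hnonneg Hprob.
Let M1 := Hm1 rho Hnonneg Hmean.

Lemma key r n p : 1 <= r -> (p <= n)%nat ->
  exists E, gw_cond_expect rho n (fun t => rpow (ln (INR (reduced_count n (n - p) t))) r) E /\
            rpow E (/ r) <= 2 * (r + ln (2 * q p / q n)).
Proof.
  intros Hr Hpn.
  set (S := fun t => trunc_ok n t /\ reaches n t = true).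
  pose proof (qp n) as Hqn. pose proof (qp p) as Hqp.
  assert (Hqpn : q n <= q p) by (apply (q_dec alpha rho L); auto).
  destruct (tau_small rho Hprob (q n / (2 * (INR n + 1) ^ 2))) as [D0 HD0].
  { apply Rdiv_lt_0_compat. lra. pose proof (pos_INR n). nra. }
  set (Mv := Rmax (exp r) (2 * q p / q n)).
  assert (HMv1 : exp r <= Mv) by apply Rmax_l.
  assert (HMv2 : 2 * q p / q n <= Mv) by apply Rmax_r.
  assert (Hr0 : 0 < exp r) by apply exp_pos.
  set (c := Rpower (ln Mv) r).
  assert (Hc : 0 < c) by (unfold c, Rpower; apply exp_pos).
  destruct (expect_bound S (gw_weight rho n) (fun t => rpow (ln (INR (reduced_count n (n - p) t))) r)
     (fun t => INR (reduced_count n (n - p) t)) (q n / 2) (q p) c Mv) as [A [P [HA [HP [HE0 HE]]]]].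
  - intros; apply W_nonneg; auto.
  - intros; apply pos_INR.
  - lra.
  - lra.
  - intros t _. apply pointwise; auto. apply pos_INR.
  - intros L0 HN HS. destruct (deg_exists_list n L0) as [D HD].
    change (lsum (gw_weight rho n) L0) with (ls (gw_weight rho n) L0).
    eapply Rle_trans. apply (ls_sub _ L0 (U D n)); auto.
    intros t Ht. rewrite Forall_forall in HS, HD. apply U_in; auto. apply HS; auto.
    intros; apply W_nonneg; auto.
    apply (mass_bounds rho Hnonneg P1 D n).
  - intros L0 HN HS. destruct (deg_exists_list n L0) as [D HD].
    change (lsum (fun t => gw_weight rho n t * INR (reduced_count n (n - p) t)) L0) with (ls (fun t => gw_weight rho n t * INR (reduced_count n (n - p) t)) L0).
    eapply Rle_trans. apply (ls_sub _ L0 (U D n)); auto.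
    intros t Ht. rewrite Forall_forall in HS, HD. apply U_in; auto. apply HS; auto.
    intros; apply Rmult_le_pos. apply W_nonneg; auto. apply pos_INR.
    pose proof (Zsum rho Hnonneg P1 M1 D p (n - p)) as HZ.
    replace (p + (n - p))%nat with n in HZ by lia.
    eapply Rle_trans. exact HZ. apply (surv_le_q alpha rho L); auto.
  - exists (filter (reaches n) (U D0 n)). split. apply NoDup_filter, NoDup_U.
    split. rewrite Forall_forall. intros t Ht. apply filter_In in Ht. destruct Ht. split; auto. eapply U_trunc; eauto.
    change (lsum (gw_weight rho n) (filter (reaches n) (U D0 n))) with (ls (gw_weight rho n) (filter (reaches n) (U D0 n))).
    rewrite ls_filter. change (ls (fun x => gw_weight rho n x * ind (reaches n x)) (U D0 n)) with (surv rho D0 n).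
    pose proof (surv_lower alpha rho L Hnonneg Hprob Hmean HL Hgf D0 n).
    assert ((INR n + 1) ^ 2 * tau rho D0 <= q n / 2).
    { pose proof (pos_INR n). assert (0 < (INR n + 1) ^ 2) by nra.
      apply Rmult_lt_compat_l with (r := (INR n + 1) ^ 2) in HD0; auto.
      replace ((INR n + 1) ^ 2 * (q n / (2 * (INR n + 1) ^ 2))) with (q n / 2) in HD0 by (field; lra). lra. }
    fold q in H. lra.
  - lra.
  - exists (A / P). split. exists A, P. split; auto.
    assert (HEle : A / P <= 2 * c).
    { assert (q p / (Mv * (q n / 2)) <= 1).
      { apply Rmult_le_reg_r with (Mv * (q n / 2)). nra. field_simplify; try lra. 
        assert (2 * q p <= Mv * q n). { apply Rmult_le_reg_r with (/ q n). apply Rinv_0_lt_compat; lra.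
          replace (Mv * q n * / q n) with Mv by (field; lra). unfold Rdiv in HMv2. lra. } lra. }
      nra. }
    assert (Hln : r <= ln Mv) by (rewrite <- (ln_exp r); apply ln_mono; lra).
    eapply Rle_trans. apply (rpow_bound (A / P) (ln Mv) r Hr ltac:(lra) HEle).
    apply Rmult_le_compat_l. lra.
    assert (1 <= 2 * q p / q n). { apply Rmult_le_reg_r with (q n). lra. field_simplify; lra. }
    assert (0 <= ln (2 * q p / q n)) by (apply ln_nonneg; auto).
    unfold Mv, Rmax. destruct (Rle_dec (exp r) (2 * q p / q n)). lra. rewrite ln_exp. lra.
Qed.
End I.

End M_I.
Import M_I.


Theorem mainTheorem14 (alpha : R) (rho : nat -> R) (L : R -> R)
  (Halpha : 1 < alpha <= 2)
  (Hnonneg : forall k, 0 <= rho k)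
  (Hprob : infinite_sum rho 1)
  (Hmean : infinite_sum (fun k => INR k * rho k) 1)
  (Hnondeg : rho 1%nat <> 1)
  (HL : slowly_varying_0 L)
  (Hgf : forall s, 0 <= s < 1 ->
     infinite_sum (fun k => rho k * s ^ k) (s + Rpower (1 - s) alpha * L (1 - s))) :
  forall r : R, 1 <= r ->
  exists C : R,
    (forall n p : nat, (2 <= n)%nat -> (1 <= p)%nat -> (2 * p <= n)%nat ->
       exists E, gw_cond_expect rho n
                   (fun t => rpow (ln (INR (reduced_count n (n - p) t))) r) E /\
                 rpow E (/ r) <= C * ln (INR n / INR p)) /\
    (forall n : nat, (2 <= n)%nat ->
       exists E, gw_cond_expect rho n
                   (fun t => rpow (ln (INR (reduced_count n n t))) r) E /\
                 rpow E (/ r) <= C * ln (INR n)).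
Proof.
  intros r Hr.
  destruct (q_ratio alpha rho L Halpha Hnonneg Hprob Hmean HL Hgf) as [K [HK HKr]].
  pose proof (q_props alpha rho L Hnonneg Hprob Hmean HL Hgf) as qp.
  set (q := M_F.q alpha L) in *.
  assert (Hl2 : 0 < ln 2). { pose proof (ln_increasing 1 2 ltac:(lra) ltac:(lra)). rewrite ln_1 in H. lra. }
  set (c1 := ln (/ q 1%nat)).
  assert (Hc1 : 0 <= c1). { unfold c1. apply ln_nonneg. pose proof (qp 1%nat). rewrite <- Rinv_1. apply Rinv_le_contravar; lra. }
  exists (2 * ((r + ln 2 + c1) / ln 2 + K)). split.
  - intros n p Hn Hp Hpn.
    destruct (key alpha rho L Hnonneg Hprob Hmean HL Hgf r n p Hr ltac:(lia)) as [E [HE HEb]].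
    exists E. split; auto. eapply Rle_trans; [exact HEb|].
    pose proof (qp n). pose proof (qp p).
    assert (H2 : 2 <= INR n / INR p).
    { assert (1 <= INR p) by (apply (le_INR 1); lia). assert (INR (2 * p) <= INR n) by (apply le_INR; lia).
      rewrite mult_INR in H2. simpl in H2. apply Rmult_le_reg_r with (INR p). lra. field_simplify; lra. }
    assert (Hlnp : ln 2 <= ln (INR n / INR p)) by (apply ln_mono; lra).
    specialize (HKr p (n - p)%nat Hp). replace (p + (n - p))%nat with n in HKr by lia.
    change (M_F.q alpha L) with q. rewrite (ln_div' (2 * q p) (q n)), ln_mult by (try apply Rmult_lt_0_compat; lra).
    rewrite ln_div' in HKr by lra.
    assert (Hx : (r + ln 2 + c1) / ln 2 * ln (INR n / INR p) >= r + ln 2).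
    { apply Rle_ge. apply Rmult_le_reg_r with (ln 2). auto.
      replace ((r + ln 2 + c1) / ln 2 * ln (INR n / INR p) * ln 2) with ((r + ln 2 + c1) * ln (INR n / INR p)) by (field; lra).
      assert (0 <= r + ln 2) by lra. nra. }
    nra.
  - intros n Hn.
    destruct (key alpha rho L Hnonneg Hprob Hmean HL Hgf r n 0 Hr ltac:(lia)) as [E [HE HEb]].
    rewrite Nat.sub_0_r in HE.
    exists E. split; auto. eapply Rle_trans; [exact HEb|].
    pose proof (qp n). pose proof (qp 1%nat).
    assert (H2 : 2 <= INR n) by (apply (le_INR 2); lia).
    assert (Hlnp : ln 2 <= ln (INR n)) by (apply ln_mono; lra).
    specialize (HKr 1%nat (n - 1)%nat ltac:(lia)). replace (1 + (n - 1))%nat with n in HKr by lia.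
    fold q in HKr. simpl (INR 1) in HKr. unfold Rdiv in HKr at 2. rewrite Rinv_1, Rmult_1_r in HKr.
    change (M_F.q alpha L) with q.
    replace (2 * q 0%nat / q n) with (2 * (q 1%nat / q n) * / q 1%nat).
    2:{ simpl (q 0%nat). field. lra. }
    rewrite ln_mult, ln_mult by (try apply Rmult_lt_0_compat; try apply Rdiv_lt_0_compat; try apply Rinv_0_lt_compat; lra).
    fold c1.
    assert (Hx : (r + ln 2 + c1) / ln 2 * ln (INR n) >= r + ln 2 + c1).
    { apply Rle_ge. apply Rmult_le_reg_r with (ln 2). auto.
      replace ((r + ln 2 + c1) / ln 2 * ln (INR n) * ln 2) with ((r + ln 2 + c1) * ln (INR n)) by (field; lra).
      assert (0 <= r + ln 2 + c1) by lra. nra. }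
    nra.
Qed.
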